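(* Let $\Omega_n=\dfrac{\pi^{n/2}}{\Gamma\left(\frac n2+1\right)}$ for $n\in\mathbb{N}_0$, and \[ p(n)=\frac1{2n}-\frac1{2n^2}+\frac5{12n^3}-\frac1{4n^4}+\frac1{10n^5}-\frac1{6n^6},\qquad q(n)=p(n)+\frac1{6n^6}. \] Then for every $n\in\mathbb{N}$, \[ p(n)<\ln\frac{\Omega_n^2}{\Omega_{n-1}\Omega_{n+1}}<q(n). \]
   Context: $\Omega_n$ is the volume of the unit ball in $\mathbb{R}^n$ ($\Omega_0=1$); $\Gamma$ is Euler's gamma function. *)

(* Defs.v *)
From Stdlib Require Import Reals.
From Coquelicot Require Import Coquelicot.
Open Scope R_scope.

Definition Gamma (x : R) : R :=
  RInt_gen (fun t => Rpower t (x - 1) * exp (- t)) (at_right 0) (Rbar_locally p_infty).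

Definition Omega (n : nat) : R :=
  Rpower PI (INR n / 2) / Gamma (INR n / 2 + 1).

Definition p_fun (n : R) : R :=
  1 / (2 * n) - 1 / (2 * n ^ 2) + 5 / (12 * n ^ 3) - 1 / (4 * n ^ 4)
  + 1 / (10 * n ^ 5) - 1 / (6 * n ^ 6).

Definition q_fun (n : R) : R := p_fun n + 1 / (6 * n ^ 6).

(* Main.v *)
Require Import Defs.
From Stdlib Require Import Reals Lra Lia Classical.
From Coquelicot Require Import Coquelicot.
Open Scope R_scope.

Definition gi (s t : R) : R := Rpower t (s - 1) * exp (- t).

Lemma gi_derive s t : 0 < t -> ex_derive (gi s) t.
Proof. intros ht. unfold gi, Rpower. auto_derive. lra. Qed.

Lemma gi_cont s t : 0 < t -> continuous (gi s) t.
Proof. intros; apply (ex_derive_continuous (gi s)), gi_derive; auto. Qed.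

Lemma gi_exRInt s a b : 0 < a -> a <= b -> ex_RInt (gi s) a b.
Proof.
  intros ha hab. apply (@ex_RInt_continuous R_CompleteNormedModule). intros z Hz.
  rewrite Rmin_left in Hz by lra. apply gi_cont; lra.
Qed.

Lemma gi_pos s t : 0 < gi s t.
Proof. unfold gi, Rpower. apply Rmult_lt_0_compat; apply exp_pos. Qed.

Lemma exp_le_exp x y : x <= y -> exp x <= exp y.
Proof. intros [h|h]; [left; apply exp_increasing; auto | right; subst; auto]. Qed.

Lemma ln_le_sqrt t : 0 < t -> ln t <= 2 * sqrt t.
Proof.
  intros ht. assert (hs: 0 < sqrt t) by (apply sqrt_lt_R0; lra).
  assert (E: ln t = 2 * ln (sqrt t)).
  { rewrite <- (sqrt_sqrt t) at 1 by lra. rewrite ln_mult by lra. ring. }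
  rewrite E. pose proof (exp_ineq1_le (ln (sqrt t))). rewrite exp_ln in H by lra. lra.
Qed.

Lemma gi_bound s t : 1 <= s -> 0 < t -> gi s t <= exp (2 * (s - 1) ^ 2) * exp (- t / 2).
Proof.
  intros hs ht. unfold gi, Rpower. rewrite <- !exp_plus.
  apply exp_le_exp.
  pose proof (ln_le_sqrt t ht). assert (hs0: 0 <= sqrt t) by apply sqrt_pos.
  assert (tt: sqrt t * sqrt t = t) by (apply sqrt_sqrt; lra).
  assert ((s-1) * ln t <= (s-1) * (2 * sqrt t)) by (apply Rmult_le_compat_l; lra).
  assert (0 <= (sqrt t - 2*(s-1))^2) by apply pow2_ge_0.
  nra.
Qed.

Lemma ball_R (x : R) (e : R) (y : R) : @ball R_UniformSpace x e y <-> Rabs (Rminus y x) < e.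
Proof. unfold ball; simpl. unfold AbsRing_ball, abs, minus, plus, opp; simpl. unfold Rminus. tauto. Qed.

Lemma gen_ge0 f l : (forall x, 0 < x -> 0 <= f x) ->
  is_RInt_gen f (at_right 0) (Rbar_locally p_infty) l -> 0 <= l.
Proof.
  intros Hf H. destruct (Rle_lt_dec 0 l) as [h|h]; auto. exfalso.
  assert (hl : 0 < - l) by lra.
  specialize (H (fun y => y < 0)).
  destruct H as [Q R HQ HR HP].
  { exists (mkposreal _ hl). intros y Hy. apply ball_R in Hy. simpl in Hy.
    apply Rabs_def2 in Hy. destruct Hy. unfold minus, plus, opp in *; simpl in *. lra. }
  destruct HQ as [d Hd]. destruct HR as [M HM].
  set (a := d / 2). assert (ha : 0 < a) by (unfold a; destruct d; simpl; lra).
  assert (Qa : Q a). { apply Hd; auto. apply ball_R. rewrite Rminus_0_r, Rabs_pos_eq by lra.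
    unfold a; destruct d; simpl; lra. }
  set (b := Rmax a M + 1). assert (Rb : R b). { apply HM. unfold b. pose proof (Rmax_r a M); lra. }
  destruct (HP a b Qa Rb) as [y [Hy Hy0]]. simpl in Hy.
  assert (hab : a <= b) by (unfold b; pose proof (Rmax_l a M); lra).
  assert (ex_RInt f a b) by (exists y; auto).
  assert (0 <= RInt f a b). { apply RInt_ge_0; auto. intros x hx; apply Hf; lra. }
  rewrite (is_RInt_unique f a b y Hy) in H0. lra.
Qed.

Lemma ex_gen_sup f B : (forall a b, 0 < a -> a <= b -> ex_RInt f a b) ->
  (forall x, 0 < x -> 0 <= f x) ->
  (forall a b, 0 < a -> a <= b -> RInt f a b <= B) ->
  exists L, is_RInt_gen f (at_right 0) (Rbar_locally p_infty) L /\
    forall a b, 0 < a -> a <= b -> RInt f a b <= L.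
Proof.
  intros Hex Hf HB.
  set (E := fun y => exists a b, 0 < a /\ a <= b /\ y = RInt f a b).
  destruct (completeness E) as [L [Hub Hlub]].
  { exists B. intros y [a [b [ha [hab ->]]]]. apply HB; auto. }
  { exists (RInt f 1 1). exists 1, 1. repeat split; lra. }
  assert (Hup : forall a b, 0 < a -> a <= b -> RInt f a b <= L).
  { intros a b ha hab. apply Hub. exists a, b; auto. }
  exists L. split; [|exact Hup].
  intros P [eps HP].
  assert (Hex0 : exists a0 b0, 0 < a0 /\ a0 <= b0 /\ L - eps < RInt f a0 b0).
  { apply NNPP. intros Hn. assert (L <= L - eps).
    { apply Hlub. intros y [a [b [ha [hab ->]]]].
      destruct (Rle_lt_dec (RInt f a b) (L - eps)) as [h|h]; auto.
      exfalso; apply Hn; exists a, b; auto. }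
    destruct eps; simpl in *; lra. }
  destruct Hex0 as [a0 [b0 [ha0 [hab0 Hlt]]]].
  apply (Filter_prod _ _ _ (fun a => 0 < a < a0) (fun b => b0 < b)).
  - exists (mkposreal _ ha0). intros y Hy hy. apply ball_R in Hy. simpl in Hy.
    apply Rabs_def2 in Hy. destruct Hy. unfold minus, plus, opp in *; simpl in *. split; lra.
  - exists b0. auto.
  - intros a b [ha hab] hb. simpl. exists (RInt f a b). split.
    + apply (@RInt_correct R_CompleteNormedModule). apply Hex; lra.
    + apply HP. apply ball_R. unfold minus, plus, opp in *; simpl in *.
      assert (E1 : RInt f a b = RInt f a a0 + RInt f a0 b0 + RInt f b0 b).
      { rewrite <- (RInt_Chasles f a a0 b) by (apply Hex; lra).
        rewrite <- (RInt_Chasles f a0 b0 b) by (apply Hex; lra).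
        unfold plus; simpl; ring. }
      assert (0 <= RInt f a a0). { apply RInt_ge_0; [lra| apply Hex; lra|]. intros; apply Hf; lra. }
      assert (0 <= RInt f b0 b). { apply RInt_ge_0; [lra| apply Hex; lra|]. intros; apply Hf; lra. }
      pose proof (Hup a b ha ltac:(lra)).
      apply Rabs_def1; lra.
Qed.

Lemma Gamma_gi s : Gamma s = RInt_gen (gi s) (at_right 0) (Rbar_locally p_infty).
Proof. reflexivity. Qed.

Lemma RInt_exp_half C a b : a <= b -> RInt (fun t => C * exp (- t / 2)) a b = 2 * C * exp (- a / 2) - 2 * C * exp (- b / 2).
Proof.
  intros hab.
  assert (H : is_RInt (fun t => C * exp (- t / 2)) a b (minus (-2 * C * exp (- b / 2)) (-2 * C * exp (- a / 2)))).
  { apply (@is_RInt_derive R_CompleteNormedModule (fun t => -2 * C * exp (- t / 2))).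
    - intros x _. auto_derive; [auto| unfold Rdiv; field].
    - intros x _. apply (ex_derive_continuous (fun t => C * exp (- t / 2)) x). auto_derive. auto. }
  rewrite (is_RInt_unique _ _ _ _ H). unfold minus, plus, opp; simpl. ring.
Qed.

Lemma Gamma_spec s : 1 <= s ->
  is_RInt_gen (gi s) (at_right 0) (Rbar_locally p_infty) (Gamma s) /\ 0 < Gamma s.
Proof.
  intros hs. set (C := exp (2 * (s - 1) ^ 2)).
  assert (hC : 0 < C) by apply exp_pos.
  destruct (ex_gen_sup (gi s) (2 * C)) as [L [HL Hle]].
  - intros; apply gi_exRInt; auto.
  - intros; left; apply gi_pos.
  - intros a b ha hab. apply Rle_trans with (RInt (fun t => C * exp (- t / 2)) a b).
    + apply RInt_le; auto. apply gi_exRInt; auto.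
      apply (@ex_RInt_continuous R_CompleteNormedModule). intros z _.
      apply (ex_derive_continuous (fun t => C * exp (- t / 2)) z). auto_derive. auto.
      intros x hx. apply gi_bound; lra.
    + rewrite RInt_exp_half by auto. pose proof (exp_pos (- a / 2)). pose proof (exp_pos (- b / 2)).
      assert (exp (- a / 2) <= 1). { rewrite <- exp_0. apply exp_le_exp. lra. } nra.
  - assert (EG : Gamma s = L).
    { rewrite Gamma_gi. apply is_RInt_gen_unique. exact HL. }
    rewrite EG. split; auto.
    apply Rlt_le_trans with (RInt (gi s) 1 2); [|apply Hle; lra].
    apply Rlt_le_trans with (RInt (fun _ => exp (-2)) 1 2).
    + rewrite (@RInt_const R_CompleteNormedModule). unfold scal; simpl; unfold mult; simpl.
      apply Rmult_lt_0_compat; [lra| apply exp_pos].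
    + apply RInt_le; [lra| |apply gi_exRInt; lra|].
      apply ex_RInt_const.
      intros x hx. unfold gi, Rpower.
      assert (0 <= ln x). { rewrite <- ln_1. apply ln_le; lra. }
      assert (1 <= exp ((s - 1) * ln x)). { rewrite <- exp_0 at 1. apply exp_le_exp. apply Rmult_le_pos; lra. }
      assert (exp (-2) <= exp (- x)) by (apply exp_le_exp; lra).
      pose proof (exp_pos (-2)). nra.
Qed.

Lemma gi_succ s t : 0 < t -> gi (s + 1) t = t * gi s t.
Proof.
  intros ht. unfold gi, Rpower.
  replace (s + 1 - 1) with ((s - 1) + 1) by ring.
  rewrite Rmult_plus_distr_r, Rmult_1_l, exp_plus, exp_ln by auto. ring.
Qed.

Lemma Gamma_feq s : 1 <= s -> Gamma (s + 1) = s * Gamma s.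
Proof.
  intros hs.
  destruct (Gamma_spec s hs) as [H1 _].
  destruct (Gamma_spec (s + 1) ltac:(lra)) as [H2 _].
  set (H := fun t => - (exp (s * ln t) * exp (- t))).
  set (g := fun t => gi (s + 1) t - s * gi s t).
  assert (Hd : forall t, 0 < t -> is_derive H t (g t)).
  { intros t ht. unfold H, g. rewrite gi_succ by auto. unfold gi, Rpower.
    auto_derive; [lra|].
    replace (s * ln t) with ((s - 1) * ln t + ln t) by ring.
    rewrite exp_plus, exp_ln by auto. field. lra. }
  assert (Hg : forall t, 0 < t -> continuous g t).
  { intros t ht. unfold g.
    apply (ex_derive_continuous (fun t => gi (s + 1) t - s * gi s t) t).
    unfold gi, Rpower. auto_derive. lra. }
  assert (HD : is_RInt_gen (Derive H) (at_right 0) (Rbar_locally p_infty) (0 - 0)).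
  { apply is_RInt_gen_Derive.
    - apply (Filter_prod _ _ _ (fun a => 0 < a) (fun b => 0 < b)).
      + exists (mkposreal 1 Rlt_0_1). intros; auto.
      + exists 0. auto.
      + intros a b ha hb x hx. simpl in hx. exists (g x). apply Hd.
        pose proof (Rmin_glb_lt a b 0 ha hb). lra.
    - apply (Filter_prod _ _ _ (fun a => 0 < a) (fun b => 0 < b)).
      + exists (mkposreal 1 Rlt_0_1). intros; auto.
      + exists 0. auto.
      + intros a b ha hb x hx. simpl in hx.
        pose proof (Rmin_glb_lt a b 0 ha hb).
        apply (continuous_ext_loc _ g).
        * apply (locally_open (fun y => 0 < y)). apply open_gt.
          intros y hy. symmetry. apply is_derive_unique. apply Hd; auto. lra.
        * apply Hg. lra.
    - apply filterlim_locally. intros eps.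
      assert (hd : 0 < Rmin eps 1) by (apply Rmin_glb_lt; [apply cond_pos|lra]).
      exists (mkposreal _ hd). intros y Hy0 hy.
      assert (Hy : Rabs (y - 0) < Rmin eps 1) by (apply ball_R; exact Hy0).
      rewrite Rminus_0_r, Rabs_pos_eq in Hy by lra.
      apply ball_R. unfold H. rewrite Rminus_0_r, Rabs_Ropp, Rabs_pos_eq.
      2: { left; apply Rmult_lt_0_compat; apply exp_pos. }
      assert (ln y <= 0). { rewrite <- ln_1. apply ln_le; auto. pose proof (Rmin_r eps 1). lra. }
      assert (exp (s * ln y) <= exp (ln y)) by (apply exp_le_exp; nra).
      rewrite exp_ln in H3 by auto.
      assert (exp (- y) <= 1). { rewrite <- exp_0. apply exp_le_exp. lra. }
      pose proof (exp_pos (s * ln y)). pose proof (Rmin_l eps 1). nra.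
    - apply filterlim_locally. intros eps.
      replace (s + 1 - 1) with s by ring.
      exists (Rmax 1 (2 * (2 * s ^ 2 - ln eps))). intros y hy.
      pose proof (Rmax_l 1 (2 * (2 * s ^ 2 - ln eps))) as M1.
      pose proof (Rmax_r 1 (2 * (2 * s ^ 2 - ln eps))) as M2.
      apply ball_R. unfold H. rewrite Rminus_0_r, Rabs_Ropp, Rabs_pos_eq.
      2: { left; apply Rmult_lt_0_compat; apply exp_pos. }
      pose proof (gi_bound (s + 1) y ltac:(lra) ltac:(lra)) as GB.
      unfold gi, Rpower in GB. replace (s + 1 - 1) with s in GB by ring.
      eapply Rle_lt_trans; [exact GB|].
      rewrite <- exp_plus. rewrite <- (exp_ln eps) by apply cond_pos.
      apply exp_increasing. lra. }
  assert (Hg2 : is_RInt_gen g (at_right 0) (Rbar_locally p_infty) 0).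
  { rewrite Rminus_0_r in HD.
    apply (is_RInt_gen_ext (Derive H)); [|exact HD].
    apply (Filter_prod _ _ _ (fun a => 0 < a) (fun b => 0 < b)).
    + exists (mkposreal 1 Rlt_0_1). intros; auto.
    + exists 0. auto.
    + intros a b ha hb x hx. simpl in hx.
      pose proof (Rmin_glb_lt a b 0 ha hb).
      apply is_derive_unique. apply Hd. lra. }
  assert (Hg3 : is_RInt_gen g (at_right 0) (Rbar_locally p_infty) (minus (Gamma (s + 1)) (scal s (Gamma s)))).
  { apply (is_RInt_gen_ext (fun y => minus (gi (s + 1) y) (scal s (gi s y)))).
    - apply (Filter_prod _ _ _ (fun a => True) (fun b => True)).
      + exists (mkposreal 1 Rlt_0_1). intros; auto.
      + exists 0. auto.
      + intros. reflexivity.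
    - apply (is_RInt_gen_minus (gi (s + 1)) (fun y => scal s (gi s y))). exact H2. apply (is_RInt_gen_scal (gi s)). exact H1. }
  apply (@is_RInt_gen_unique R_CompleteNormedModule) in Hg2. apply (@is_RInt_gen_unique R_CompleteNormedModule) in Hg3.
  rewrite Hg2 in Hg3.
  assert (E : minus (Gamma (s + 1)) (scal s (Gamma s)) = Gamma (s + 1) - s * Gamma s) by reflexivity.
  rewrite E in Hg3. lra.
all: apply Proper_StrongProper; first [apply at_right_proper_filter | apply Rbar_locally_filter]. Qed.

Lemma Gamma_lconv a b : 1 <= a -> 1 <= b -> Gamma ((a + b) / 2) ^ 2 <= Gamma a * Gamma b.
Proof.
  intros ha hb. set (m := (a + b) / 2).
  destruct (Gamma_spec a ha) as [Ha Pa].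
  destruct (Gamma_spec b hb) as [Hb Pb].
  destruct (Gamma_spec m ltac:(unfold m; lra)) as [Hm Pm].
  assert (Q : forall lam, 0 <= Gamma a + 2 * lam * Gamma m + lam ^ 2 * Gamma b).
  { intros lam.
    assert (HI : is_RInt_gen (fun t => plus (plus (gi a t) (scal (2 * lam) (gi m t))) (scal (lam ^ 2) (gi b t)))
              (at_right 0) (Rbar_locally p_infty)
              (plus (plus (Gamma a) (scal (2 * lam) (Gamma m))) (scal (lam ^ 2) (Gamma b)))).
    { apply (is_RInt_gen_plus (fun t => plus (gi a t) (scal (2 * lam) (gi m t))) (fun t => scal (lam ^ 2) (gi b t))).
      apply (is_RInt_gen_plus (gi a) (fun t => scal (2 * lam) (gi m t))). exact Ha.
      apply (is_RInt_gen_scal (gi m)). exact Hm.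
      apply (is_RInt_gen_scal (gi b)). exact Hb. }
    apply gen_ge0 in HI.
    - exact HI.
    - intros t ht. change (0 <= gi a t + 2 * lam * gi m t + lam ^ 2 * gi b t).
      set (A := exp (((a - 1) * ln t + - t) / 2)).
      set (B := exp (((b - 1) * ln t + - t) / 2)).
      assert (E1 : gi a t = A * A).
      { unfold gi, Rpower, A. rewrite <- !exp_plus. f_equal. field. }
      assert (E2 : gi m t = A * B).
      { unfold gi, Rpower, A, B, m. rewrite <- !exp_plus. f_equal. field. }
      assert (E3 : gi b t = B * B).
      { unfold gi, Rpower, B. rewrite <- !exp_plus. f_equal. field. }
      rewrite E1, E2, E3.
      replace (A * A + 2 * lam * (A * B) + lam ^ 2 * (B * B)) with ((A + lam * B) ^ 2) by ring.
      apply pow2_ge_0. }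
  specialize (Q (- Gamma m / Gamma b)).
  assert (E : Gamma a + 2 * (- Gamma m / Gamma b) * Gamma m + (- Gamma m / Gamma b) ^ 2 * Gamma b
              = Gamma a - Gamma m ^ 2 / Gamma b) by (field; lra).
  rewrite E in Q.
  assert (Gamma m ^ 2 / Gamma b <= Gamma a) by lra.
  apply (Rmult_le_compat_r (Gamma b)) in H; [|lra].
  replace (Gamma m ^ 2 / Gamma b * Gamma b) with (Gamma m ^ 2) in H by (field; lra).
  exact H.
Qed.


Definition LB (u : R) := u + u ^ 2 / 2 + u ^ 3 / 3 + u ^ 4 / 4.
Definition UB (u : R) := u + u ^ 2 / 2 + u ^ 3 / (3 * (1 - u)).

Lemma LB_le u : 0 <= u < 1 -> LB u <= - ln (1 - u).
Proof.
  intros hu.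
  set (phi := fun v => - ln (1 - v) - LB v).
  assert (HD : forall x, 0 <= x <= u -> is_derive phi x (x ^ 4 / (1 - x))).
  { intros x hx. unfold phi, LB. auto_derive; [lra|]. field. lra. }
  destruct (MVT_gen phi 0 u (fun x => x ^ 4 / (1 - x))) as [c [hc Ec]].
  - intros x hx. rewrite Rmin_left, Rmax_right in hx by lra. apply HD; lra.
  - intros x hx. rewrite Rmin_left, Rmax_right in hx by lra.
    apply continuity_pt_filterlim. apply (ex_derive_continuous phi x). exists (x ^ 4 / (1 - x)). apply HD; lra.
  - rewrite Rmin_left, Rmax_right in hc by lra.
    assert (phi 0 = 0). { unfold phi, LB; cbv beta. rewrite Rminus_0_r, ln_1. field. }
    assert (0 <= c ^ 4 / (1 - c)). { apply Rdiv_le_0_compat. apply pow_le; lra. lra. }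
    assert (0 <= phi u) by nra. unfold phi in H1. lra.
Qed.

Lemma UB_ge u : 0 <= u < 1 -> - ln (1 - u) <= UB u.
Proof.
  intros hu.
  set (phi := fun v => UB v + ln (1 - v)).
  assert (HD : forall x, 0 <= x <= u -> is_derive phi x (x ^ 3 / (3 * (1 - x) ^ 2))).
  { intros x hx. unfold phi, UB. auto_derive; [lra|]. field. lra. }
  destruct (MVT_gen phi 0 u (fun x => x ^ 3 / (3 * (1 - x) ^ 2))) as [c [hc Ec]].
  - intros x hx. rewrite Rmin_left, Rmax_right in hx by lra. apply HD; lra.
  - intros x hx. rewrite Rmin_left, Rmax_right in hx by lra.
    apply continuity_pt_filterlim. apply (ex_derive_continuous phi x). exists (x ^ 3 / (3 * (1 - x) ^ 2)). apply HD; lra.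
  - rewrite Rmin_left, Rmax_right in hc by lra.
    assert (phi 0 = 0). { unfold phi, UB; cbv beta. rewrite Rminus_0_r, ln_1. field. }
    assert (0 <= c ^ 3 / (3 * (1 - c) ^ 2)). { apply Rdiv_le_0_compat. apply pow_le; lra.
      assert (0 < 1 - c) by lra. nra. }
    assert (0 <= phi u) by nra. unfold phi in H1. lra.
Qed.

Lemma P1 x : 1 <= x -> p_fun x - p_fun (x + 2) < LB (1 / (x + 2) ^ 2).
Proof.
  intros hx. set (y := x - 1). assert (hy : 0 <= y) by (unfold y; lra).
  replace x with (y + 1) by (unfold y; ring).
  assert (E : LB (1 / (y + 1 + 2) ^ 2) - (p_fun (y + 1) - p_fun (y + 1 + 2)) =
    (668052 + 1711224 * y + 1858476 * y ^ 2 + 1080720 * y ^ 3 + 353196 * y ^ 4 + 61560 * y ^ 5 + 4500 * y ^ 6)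
    / (720 * (y + 1) ^ 6 * (y + 3) ^ 8)).
  { unfold LB, p_fun. field. split; lra. }
  assert (0 < (668052 + 1711224 * y + 1858476 * y ^ 2 + 1080720 * y ^ 3 + 353196 * y ^ 4 + 61560 * y ^ 5 + 4500 * y ^ 6)
    / (720 * (y + 1) ^ 6 * (y + 3) ^ 8)).
  { apply Rdiv_lt_0_compat.
    - pose proof (pow_le y 2 hy). pose proof (pow_le y 3 hy). pose proof (pow_le y 4 hy).
      pose proof (pow_le y 5 hy). pose proof (pow_le y 6 hy). lra.
    - apply Rmult_lt_0_compat; [apply Rmult_lt_0_compat; [lra|]|]; apply pow_lt; lra. }
  lra.
Qed.

Lemma P2 x : 1 <= x -> UB (1 / (x + 2) ^ 2) < q_fun x - q_fun (x + 2).
Proof.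
  intros hx. set (y := x - 1). assert (hy : 0 <= y) by (unfold y; lra).
  replace x with (y + 1) by (unfold y; ring).
  assert (E : q_fun (y + 1) - q_fun (y + 1 + 2) - UB (1 / (y + 1 + 2) ^ 2) =
    (8748 + 28920 * y + 44140 * y ^ 2 + 40840 * y ^ 3 + 23652 * y ^ 4 + 8200 * y ^ 5 + 1540 * y ^ 6 + 120 * y ^ 7)
    / (60 * (y + 1) ^ 6 * (y + 3) ^ 6 * ((y + 2) * (y + 4)))).
  { unfold UB, q_fun, p_fun. field. repeat split; try lra. nra. }
  assert (0 < (8748 + 28920 * y + 44140 * y ^ 2 + 40840 * y ^ 3 + 23652 * y ^ 4 + 8200 * y ^ 5 + 1540 * y ^ 6 + 120 * y ^ 7)
    / (60 * (y + 1) ^ 6 * (y + 3) ^ 6 * ((y + 2) * (y + 4)))).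
  { apply Rdiv_lt_0_compat.
    - pose proof (pow_le y 2 hy). pose proof (pow_le y 3 hy). pose proof (pow_le y 4 hy).
      pose proof (pow_le y 5 hy). pose proof (pow_le y 6 hy). pose proof (pow_le y 7 hy). lra.
    - apply Rmult_lt_0_compat; [apply Rmult_lt_0_compat; [apply Rmult_lt_0_compat; [lra|]|]|].
      1,2: apply pow_lt; lra. nra. }
  lra.
Qed.


Lemma p_le y : 1 <= y -> p_fun y <= / y.
Proof.
  intros hy. set (z := y - 1). assert (hz : 0 <= z) by (unfold z; lra).
  replace y with (z + 1) by (unfold z; ring).
  assert (E : / (z + 1) - p_fun (z + 1) =
    (54 + 219 * z + 420 * z ^ 2 + 395 * z ^ 3 + 180 * z ^ 4 + 30 * z ^ 5) / (60 * (z + 1) ^ 6)).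
  { unfold p_fun. field. lra. }
  assert (0 <= (54 + 219 * z + 420 * z ^ 2 + 395 * z ^ 3 + 180 * z ^ 4 + 30 * z ^ 5) / (60 * (z + 1) ^ 6)).
  { apply Rdiv_le_0_compat.
    - pose proof (pow_le z 2 hz). pose proof (pow_le z 3 hz). pose proof (pow_le z 4 hz).
      pose proof (pow_le z 5 hz). lra.
    - apply Rmult_lt_0_compat; [lra|]. apply pow_lt; lra. }
  lra.
Qed.

Lemma q_ge y : 1 <= y -> 0 <= q_fun y.
Proof.
  intros hy. set (z := y - 1). assert (hz : 0 <= z) by (unfold z; lra).
  replace y with (z + 1) by (unfold z; ring).
  assert (E : q_fun (z + 1) =
    (16 + 81 * z + 180 * z ^ 2 + 205 * z ^ 3 + 120 * z ^ 4 + 30 * z ^ 5) / (60 * (z + 1) ^ 6)).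
  { unfold q_fun, p_fun. field. lra. }
  rewrite E. apply Rdiv_le_0_compat.
  - pose proof (pow_le z 2 hz). pose proof (pow_le z 3 hz). pose proof (pow_le z 4 hz).
    pose proof (pow_le z 5 hz). lra.
  - apply Rmult_lt_0_compat; [lra|]. apply pow_lt; lra.
Qed.

Lemma telescope (d : R -> R) x0 :
  (forall x, 1 <= x -> d (x + 2) < d x) -> (forall y, 1 <= y -> - / y <= d y) -> 1 <= x0 -> 0 < d x0.
Proof.
  intros Hdec Hlow hx0.
  set (delta := d x0 - d (x0 + 2)).
  assert (hdel : 0 < delta) by (unfold delta; pose proof (Hdec x0 hx0); lra).
  destruct (archimed_cor1 delta hdel) as [N [HN HN0]].
  assert (Hmono : forall K, d (x0 + 2 + 2 * INR K) <= d (x0 + 2)).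
  { induction K as [|K IH].
    - simpl. rewrite Rmult_0_r, Rplus_0_r. lra.
    - rewrite S_INR. replace (x0 + 2 + 2 * (INR K + 1)) with ((x0 + 2 + 2 * INR K) + 2) by ring.
      pose proof (pos_INR K). pose proof (Hdec (x0 + 2 + 2 * INR K) ltac:(lra)). lra. }
  pose proof (Hmono N) as HM.
  assert (hN : 0 < INR N) by (apply lt_0_INR; lia).
  set (y := x0 + 2 + 2 * INR N).
  assert (hy : INR N <= y) by (unfold y; lra).
  pose proof (Hlow y ltac:(unfold y; pose proof (pos_INR N); lra)).
  assert (/ y <= / INR N) by (apply Rinv_le_contravar; lra).
  unfold delta in *. fold y in HM. lra.
Qed.

Definition rho x := Gamma ((x + 1) / 2) * Gamma ((x + 3) / 2) / Gamma ((x + 2) / 2) ^ 2.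

Lemma Gpos x : 1 <= x -> 0 < Gamma x.
Proof. intros; apply Gamma_spec; auto. Qed.

Lemma rho_ge1 x : 1 <= x -> 1 <= rho x.
Proof.
  intros hx. unfold rho.
  pose proof (Gamma_lconv ((x + 1) / 2) ((x + 3) / 2) ltac:(lra) ltac:(lra)) as H.
  replace (((x + 1) / 2 + (x + 3) / 2) / 2) with ((x + 2) / 2) in H by field.
  pose proof (Gpos ((x + 2) / 2) ltac:(lra)).
  apply (Rmult_le_reg_r (Gamma ((x + 2) / 2) ^ 2)). apply pow_lt; auto.
  field_simplify; [|lra]. lra.
Qed.

Lemma feq2 x : 1 <= x -> Gamma ((x + 3) / 2) = (x + 1) / 2 * Gamma ((x + 1) / 2).
Proof.
  intros hx. rewrite <- Gamma_feq by lra. f_equal. field.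
Qed.

Lemma rho_pair x : 1 <= x -> rho x * rho (x + 1) = (x + 2) / (x + 1).
Proof.
  intros hx. unfold rho.
  replace ((x + 1 + 1) / 2) with ((x + 2) / 2) by field.
  replace ((x + 1 + 3) / 2) with (((x + 1) + 3) / 2) by field.
  replace ((x + 1 + 2) / 2) with ((x + 3) / 2) by field.
  rewrite (feq2 (x + 1)) by lra.
  rewrite (feq2 x) by lra.
  replace ((x + 1 + 1) / 2) with ((x + 2) / 2) by field.
  pose proof (Gpos ((x + 1) / 2) ltac:(lra)). pose proof (Gpos ((x + 2) / 2) ltac:(lra)).
  field. repeat split; lra.
Qed.

Lemma rho_step x : 1 <= x -> rho (x + 2) = rho x * (1 - 1 / (x + 2) ^ 2).
Proof.
  intros hx. unfold rho.
  replace ((x + 2 + 1) / 2) with ((x + 3) / 2) by field.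
  replace ((x + 2 + 3) / 2) with (((x + 2) + 3) / 2) by field.
  replace ((x + 2 + 2) / 2) with (((x + 1) + 3) / 2) by field.
  rewrite (feq2 (x + 2)) by lra. rewrite (feq2 (x + 1)) by lra.
  replace ((x + 2 + 1) / 2) with ((x + 3) / 2) by field.
  replace ((x + 1 + 1) / 2) with ((x + 2) / 2) by field.
  rewrite (feq2 x) by lra.
  pose proof (Gpos ((x + 1) / 2) ltac:(lra)). pose proof (Gpos ((x + 2) / 2) ltac:(lra)).
  field. repeat split; lra.
Qed.

Lemma rho_pos x : 1 <= x -> 0 < rho x.
Proof. intros; pose proof (rho_ge1 x H); lra. Qed.

Lemma r_ge0 x : 1 <= x -> 0 <= ln (rho x).
Proof. intros hx. rewrite <- ln_1. apply ln_le; [lra| apply rho_ge1; auto]. Qed.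

Lemma r_le x : 1 <= x -> ln (rho x) <= / x.
Proof.
  intros hx.
  assert (E : ln (rho x) = ln ((x + 2) / (x + 1)) - ln (rho (x + 1))).
  { rewrite <- rho_pair by auto. rewrite ln_mult by (apply rho_pos; lra). ring. }
  pose proof (r_ge0 (x + 1) ltac:(lra)).
  pose proof (exp_ineq1_le (ln ((x + 2) / (x + 1)))).
  rewrite exp_ln in H0 by (apply Rdiv_lt_0_compat; lra).
  assert ((x + 2) / (x + 1) - 1 <= / x).
  { apply (Rmult_le_reg_r (x * (x + 1))). nra. field_simplify; try lra. }
  lra.
Qed.

Lemma r_step x : 1 <= x -> ln (rho (x + 2)) = ln (rho x) + ln (1 - 1 / (x + 2) ^ 2).
Proof.
  intros hx. rewrite rho_step by auto. apply ln_mult. apply rho_pos; auto.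
  assert (1 / (x + 2) ^ 2 < 1).
  { apply (Rmult_lt_reg_r ((x + 2) ^ 2)). apply pow_lt; lra. field_simplify; try lra. nra. }
  lra.
Qed.

Lemma u_range x : 1 <= x -> 0 <= 1 / (x + 2) ^ 2 < 1.
Proof.
  intros hx. split.
  - apply Rdiv_le_0_compat; [lra| apply pow_lt; lra].
  - apply (Rmult_lt_reg_r ((x + 2) ^ 2)). apply pow_lt; lra. field_simplify; try lra. nra.
Qed.

Lemma main_real x : 1 <= x -> p_fun x < ln (rho x) /\ ln (rho x) < q_fun x.
Proof.
  intros hx. split.
  - assert (0 < ln (rho x) - p_fun x); [|lra].
    apply (telescope (fun y => ln (rho y) - p_fun y)); auto.
    + intros y hy. rewrite r_step by auto.
      pose proof (P1 y hy). pose proof (LB_le _ (u_range y hy)). lra.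
    + intros y hy. pose proof (r_ge0 y hy). pose proof (p_le y hy). lra.
  - assert (0 < q_fun x - ln (rho x)); [|lra].
    apply (telescope (fun y => q_fun y - ln (rho y))); auto.
    + intros y hy. rewrite r_step by auto.
      pose proof (P2 y hy). pose proof (UB_ge _ (u_range y hy)). lra.
    + intros y hy. pose proof (r_le y hy). pose proof (q_ge y hy). lra.
Qed.

Lemma ratio_eq n : (1 <= n)%nat -> Omega n ^ 2 / (Omega (n - 1) * Omega (n + 1)) = rho (INR n).
Proof.
  intros hn. unfold Omega, rho.
  set (x := INR n).
  assert (hx : 1 <= x) by (unfold x; apply (le_INR 1); auto).
  rewrite minus_INR by auto. rewrite plus_INR. simpl (INR 1). fold x.
  replace (x / 2 + 1) with ((x + 2) / 2) by field.
  replace ((x - 1) / 2 + 1) with ((x + 1) / 2) by field.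
  replace ((x + 1) / 2 + 1) with ((x + 3) / 2) by field.
  assert (EP : Rpower PI ((x - 1) / 2) * Rpower PI ((x + 1) / 2) = Rpower PI (x / 2) ^ 2).
  { rewrite <- Rpower_plus. simpl. rewrite Rmult_1_r, <- Rpower_plus. f_equal. field. }
  pose proof (Gpos ((x + 1) / 2) ltac:(lra)). pose proof (Gpos ((x + 2) / 2) ltac:(lra)).
  pose proof (Gpos ((x + 3) / 2) ltac:(lra)).
  assert (0 < Rpower PI ((x - 1) / 2)) by (unfold Rpower; apply exp_pos).
  assert (0 < Rpower PI ((x + 1) / 2)) by (unfold Rpower; apply exp_pos).
  assert (0 < Rpower PI (x / 2)) by (unfold Rpower; apply exp_pos).
  replace (Rpower PI ((x - 1) / 2) / Gamma ((x + 1) / 2) * (Rpower PI ((x + 1) / 2) / Gamma ((x + 3) / 2)))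
    with (Rpower PI (x / 2) ^ 2 / (Gamma ((x + 1) / 2) * Gamma ((x + 3) / 2)))
    by (rewrite <- EP; field; lra).
  field. repeat split; lra.
Qed.

Theorem theorem14 : forall n : nat, (1 <= n)%nat ->
  p_fun (INR n) < ln (Omega n ^ 2 / (Omega (n - 1) * Omega (n + 1))) /\
  ln (Omega n ^ 2 / (Omega (n - 1) * Omega (n + 1))) < q_fun (INR n).
Proof.
  intros n hn. rewrite ratio_eq by auto. apply main_real. apply (le_INR 1); auto.
Qed.
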